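(* Assume the setting in the context, with $\theta=0$ (so $w>0$ and $\delta>0$). Set $A_m=\lfloor z_0/\delta\rfloor$. Write $x_0=\overline{x_0}\,w+\widehat{x_0}$, $l=\overline{l}\,w+\widehat{l}$ with $0\le\widehat{x_0},\widehat{l}<w$; when $y>0$ write $y_0=\overline{y_0}\,y+\widehat{y_0}$, $h=\overline{h}\,y+\widehat{h}$ with $0\le\widehat{y_0},\widehat{h}<y$. (ii.1) If $y=0$, then $$d(m,T)=(1+A_m)(1+A_m+\overline{x_0})+(\overline{l}-2)\frac{A_m(1+A_m)}{2}+\sum_{k=0}^{A_m}\left\lfloor\frac{\widehat{x_0}+k\widehat{l}}{w}\right\rfloor.\quad( ** )$$ (ii.2) If $y>0$, set $k_1=\left\lceil\frac{z_0y-y_0\delta}{a}\right\rceil$ (then $k_1\ge0$). (ii.2.1) If $k_1=0$, $d(m,T)$ is given by $( ** )$. (ii.2.2) If $1\le k_1\le A_m$, then $$d(m,T)=(1+A_m)(1+A_m+\overline{x_0})+k_1(\overline{y_0}-A_m)+(\overline{l}-2)\frac{A_m(1+A_m)}2+\overline{h}\frac{(k_1-1)k_1}2+\sum_{k=0}^{A_m}\left\lfloor\frac{\widehat{x_0}+k\widehat{l}}{w}\right\rfloor+\sum_{k=0}^{k_1-1}\left\lfloor\frac{\widehat{y_0}+k\widehat{h}}{y}\right\rfloor.$$ (ii.2.3) If $k_1>A_m$, then $$d(m,T)=(1+A_m)(1+\overline{x_0}+\overline{y_0})+(\overline{l}+\overline{h}-2)\frac{A_m(1+A_m)}2+\sum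_{k=0}^{A_m}\left\lfloor\frac{\widehat{x_0}+k\widehat{l}}{w}\right\rfloor+\sum_{k=0}^{A_m}\left\lfloor\frac{\widehat{y_0}+k\widehat{h}}{y}\right\rfloor.$$
   Context: Let $a<b<c$ be positive integers with $\gcd(a,b,c)=1$ and $T=\langle a,b,c\rangle=\{xa+yb+zc:x,y,z\in\mathbb N\}$. For $m\in T$, the denumerant $d(m,T)$ is the number of $(x,y,z)\in\mathbb N^3$ with $xa+yb+zc=m$. For $(i,j)\in\mathbb N^2$ let $[\![i,j]\!]=[i,i+1)\times[j,j+1)\subset\mathbb R^2$. For integers $0\le w<l$, $0\le y<h$, the L-shape $\mathrm L(l,h,w,y)$ is the set of unit squares $[\![i,j]\!]$ with $0\le i<l$, $0\le j<h$, excluding those with $i\ge l-w$ and $j\ge h-y$ (it has $lh-wy$ squares). An L-shape $\mathcal H$ is related to $T$ if it consists of exactly $c$ squares, every residue class modulo $c$ equals $ia+jb \bmod c$ for exactly one $[\![i,j]\!]\in\mathcal H$, and for each $[\![i,j]\!]\in\mathcal H$, $ia+jb=\min\{sa+tb:(s,t)\in\mathbb N^2,\ sa+tb\equiv ia+jb \pmod c\}$. Setting: $\mathcal H=\mathrm L(l,h,w,y)$ is an L-shape related to $T$, and $\delta=(la-yb)/c$, $\theta=(hb-wa)/c$; it is known that $\delta,\theta$ are nonnegative integers with $\delta+\theta>0$, $a=h\delta+y\theta$, $b=w\delta+l\theta$, $lh-wy=c$. For $m\in T$, the basic factorization of $m$ with respect to $\mathcal H$ is the unique $(x_0,y_0,z_0)\in\mathbb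 N^3$ with $x_0a+y_0b+z_0c=m$ and $[\![x_0,y_0]\!]\in\mathcal H$. Fix $m\in T$ with basic factorization $(x_0,y_0,z_0)$. *)

(* Defs.v *)
From mathcomp Require Import all_boot all_order all_algebra.
Set Implicit Arguments. Unset Strict Implicit. Unset Printing Implicit Defensive.
Import Order.TTheory GRing.Theory Num.Theory.

(* Denumerant d(m,T) of T = <a,b,c>: the number of (x,y,z) in N^3 with
   x a + y b + z c = m.  For a,b,c >= 1 every such x,y,z is <= m, so the
   bounded count below is exactly the number of such triples. *)
Definition denumerant (a b c m : nat) : nat :=
  \sum_(x < m.+1) \sum_(y < m.+1) \sum_(z < m.+1) (x * a + y * b + z * c == m).

Definition inL (l h w y i j : nat) : bool :=
  [&& i < l, j < h & ~~ ((l - w <= i) && (h - y <= j))].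

Definition related (a b c l h w y : nat) : Prop :=
  [/\
      \sum_(i < l) \sum_(j < h) inL l h w y i j = c,
      (forall r, r < c ->
         \sum_(i < l) \sum_(j < h)
            (inL l h w y i j && ((i * a + j * b) %% c == r)) = 1) &
      (forall i j, inL l h w y i j ->
         forall s t, s * a + t * b = i * a + j * b %[mod c] ->
           i * a + j * b <= s * a + t * b)].

Definition floor_sum (u v w n : nat) : nat :=
  \sum_(k < n.+1) ((u + k * v) %/ w).

Definition ceil_div (n : int) (a : nat) : int := - ((- n) %/ (a : int))%Z.

(* Main.v *)
Require Import Defs.
From mathcomp Require Import all_boot all_order all_algebra.
From mathcomp Require Import zify ring.
Import Order.TTheory GRing.Theory Num.Theory.

Lemma sum_lt_cnt n K : \sum_(i < n) (i < K : nat) = minn n K.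
Proof.
elim: n => [|n IH]; first by rewrite big_ord0 min0n.
rewrite big_ord_recr /= IH; case: ltnP => h; lia.
Qed.

Lemma sum_gt_cnt n K : \sum_(i < n) (K < i : nat) = n - minn n K.+1.
Proof.
elim: n => [|n IH]; first by rewrite big_ord0.
rewrite big_ord_recr /= IH; case: ltnP => h; lia.
Qed.

Lemma sum_mulle_cnt n w X : 0 < w -> \sum_(j < n) (j * w <= X : nat) = minn n (X %/ w).+1.
Proof.
move=> w0; rewrite -sum_lt_cnt; apply: eq_bigr => j _.
by rewrite ltnS leq_divRL.
Qed.

Lemma sum_bij (T1 T2 : finType) (P : pred T1) (Q : pred T2) (f : T2 -> T1) :
  {in Q &, injective f} -> (forall q, Q q -> P (f q)) ->
  (forall p, P p -> exists2 q, Q q & f q = p) ->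
  \sum_(p : T1) (P p : nat) = \sum_(q : T2) (Q q : nat).
Proof.
move=> inj fPQ fsurj.
have E (T : finType) (R : pred T) : \sum_(p : T) (R p : nat) = #|[set p | R p]|.
  rewrite -sum1_card [RHS]big_mkcond /=; apply: eq_bigr => p _.
  by rewrite inE; case: (R p).
rewrite !E -(card_in_imset (f := f)); last by move=> u v; rewrite !inE; exact: inj.
apply: eq_card => p; rewrite inE; apply/idP/imsetP.
  by case/fsurj => q Qq <-; exists q; rewrite ?inE.
by case=> q; rewrite inE => Qq ->; exact: fPQ.
Qed.

Lemma sum_trunc n N (F : nat -> nat) : n <= N -> (forall j, n <= j -> j < N -> F j = 0) ->
  \sum_(j < N) F j = \sum_(j < n) F j.
Proof.
move=> nN F0; rewrite -!(big_mkord xpredT) (big_cat_nat (leq0n n) nN) /=.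
rewrite [X in _ + X]big1_seq ?addn0 // => j /andP[_]; rewrite mem_index_iota => /andP[].
exact: F0.
Qed.

Lemma sum_id2 n : (\sum_(i < n.+1) i) * 2 = n * n.+1.
Proof.
elim: n => [|n IH]; first by rewrite big_ord_recr big_ord0.
rewrite big_ord_recr /= mulnDl IH; lia.
Qed.

Lemma sum_id n : \sum_(i < n.+1) i = (n * (1 + n)) %/ 2.
Proof. by rewrite add1n -sum_id2 mulnK. Qed.

Lemma sum_id' n : \sum_(i < n) i = ((n - 1) * n) %/ 2.
Proof. case: n => [|n]; first by rewrite big_ord0. by rewrite sum_id subn1 /= mulnC add1n. Qed.

Lemma div_split x0 l w i : 0 < w ->
  (x0 + i * l) %/ w = x0 %/ w + i * (l %/ w) + (x0 %% w + i * (l %% w)) %/ w.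
Proof.
move=> w0.
have -> : x0 + i * l = (x0 %/ w + i * (l %/ w)) * w + (x0 %% w + i * (l %% w)).
  rewrite {1}(divn_eq x0 w) {1}(divn_eq l w); ring.
by rewrite divnMDl.
Qed.


Lemma Lcount l h w y : w <= l -> y <= h ->
  \sum_(i < l) \sum_(j < h) (inL l h w y i j : nat) = l * h - w * y.
Proof.
move=> wl yh.
have inner i : i < l -> \sum_(j < h) (inL l h w y i j : nat) = (h - y) + y * (i < l - w).
  move=> il; rewrite /inL il /=.
  transitivity (\sum_(j < h) ((i < l - w) || (j < h - y) : nat)).
    apply: eq_bigr => j _; rewrite ltn_ord /=; case: (ltnP i (l - w)); case: (ltnP j (h - y)) => //=.
  case: (ltnP i (l - w)) => /= _.
    rewrite sum_nat_const card_ord muln1; lia.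
  rewrite sum_lt_cnt; lia.
rewrite (eq_bigr (fun i : 'I_l => (h - y) + y * (i < l - w))); last by move=> i _; exact: inner.
rewrite big_split /= sum_nat_const card_ord -big_distrr /= sum_lt_cnt.
have -> : minn l (l - w) = l - w by lia.
nia.
Qed.

Lemma ceil_divP (N : int) (a : nat) : (0 < a)%N -> forall j : nat,
  ((j%:Z < ceil_div N a)%R = ((j * a)%:Z < N)%R).
Proof.
move=> a0 j; rewrite /ceil_div.
set q := ((- N) %/ a)%Z.
have e := divz_eq (- N) a.
have r0 : (0 <= ((- N) %% a)%Z)%R by apply: modz_ge0; rewrite eqz_nat -lt0n.
have r1 : (((- N) %% a)%Z < a%:Z)%R by have := @ltz_mod (- N) a; rewrite eqz_nat -lt0n => /(_ a0).
rewrite -/q in e.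
apply/idP/idP => H.
  have : (j%:Z + q <= -1)%R by lia.
  nia.
have : (0 <= j%:Z + q)%R -> False by nia.
lia.
Qed.

Lemma ceil_div_ge0 (N : int) (a : nat) : (0 < a)%N -> (- (a%:Z) < N)%R -> (0 <= ceil_div N a)%R.
Proof.
move=> a0 H; rewrite /ceil_div.
set q := ((- N) %/ a)%Z.
have e := divz_eq (- N) a.
have r0 : (0 <= ((- N) %% a)%Z)%R by apply: modz_ge0; rewrite eqz_nat -lt0n.
rewrite -/q in e.
have : (q < 1)%R by nia.
lia.
Qed.


Lemma fwd a b c l h w y d m x0 y0 z0 i j :
  a = h * d -> b = w * d -> c + w * y = l * h -> x0 * a + y0 * b + z0 * c = m ->
  j * w <= x0 + i * l -> i * y <= y0 + j * h -> i * d <= z0 ->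
  (x0 + i * l - j * w) * a + (y0 + j * h - i * y) * b + (z0 - i * d) * c = m.
Proof.
move=> -> -> hc hm h1 h2 h3.
set X := x0 + i * l - j * w; set Y := y0 + j * h - i * y; set Z := z0 - i * d.
have E1 : X + j * w = x0 + i * l by rewrite /X; lia.
have E2 : Y + i * y = y0 + j * h by rewrite /Y; lia.
have E3 : Z + i * d = z0 by rewrite /Z; lia.
rewrite -hm -E3.
have F1 := congr1 (muln (h * d)) E1.
have F2 := congr1 (muln (w * d)) E2.
have F3 := congr1 (muln (i * d)) hc.

lia.
Qed.

Lemma bwd a b c l h w y d m x0 y0 z0 x y' z :
  0 < c -> 0 < w -> 0 < d -> y0 < h -> coprime d c -> coprime w h ->
  a = h * d -> b = w * d -> c + w * y = l * h -> x0 * a + y0 * b + z0 * c = m ->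
  (forall s t, s * a + t * b = x0 * a + y0 * b %[mod c] -> x0 * a + y0 * b <= s * a + t * b) ->
  x * a + y' * b + z * c = m ->
  exists i j, [/\ i * d + z = z0, x + j * w = x0 + i * l & y' + i * y = y0 + j * h].
Proof.
move=> c0 w0 d0 y0h cdc cwh ea eb hc hm hmin hx.
have zz : z <= z0.
  rewrite leqNgt; apply/negP => lt.
  have e : (z - z0) * c + (x * a + y' * b) = x0 * a + y0 * b.
    rewrite mulnBl; have : z0 * c <= z * c by rewrite leq_mul2r ltnW ?orbT.
    lia.
  have := hmin x y'; rewrite -e modnMDl => /(_ erefl).
  have : c <= (z - z0) * c by rewrite leq_pmull // subn_gt0.
  lia.
set e := z0 - z.
have he : d * (x * h + y' * w) = d * (x0 * h + y0 * w) + e * c.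
  rewrite /e; move: hx hm; rewrite ea eb mulnBl => hx hm.
  have : z * c <= z0 * c by rewrite leq_mul2r zz orbT.
  move=> hzc.
  have -> : d * (x * h + y' * w) = x * (h * d) + y' * (w * d) by lia.
  have -> : d * (x0 * h + y0 * w) = x0 * (h * d) + y0 * (w * d) by lia.
  lia.
have dv : d %| e.
  rewrite -(Gauss_dvdl e cdc).
  have -> : e * c = d * ((x * h + y' * w) - (x0 * h + y0 * w)) by rewrite mulnBr; lia.
  exact: dvdn_mulr (dvdnn d).
set i := e %/ d.
have ei : e = i * d by rewrite /i divnK.
have h2 : x * h + y' * w = x0 * h + y0 * w + i * c.
  apply/eqP; rewrite -(eqn_pmul2l d0) he ei; apply/eqP; lia.
have h3 : x * h + (y' + i * y) * w = (x0 + i * l) * h + y0 * w.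
  have F := congr1 (muln i) hc; lia.
case: (leqP x (x0 + i * l)) => hxX.
  set X' := x0 + i * l in h3 hxX *.
  have hYY : y0 <= y' + i * y.
    have : x * h <= X' * h by rewrite leq_mul2r hxX orbT.
    move=> t; have : y0 * w <= (y' + i * y) * w by lia.
    by rewrite leq_pmul2r.
  have h4 : (X' - x) * h = (y' + i * y - y0) * w by rewrite !mulnBl; lia.
  have : w %| X' - x by rewrite -(Gauss_dvdl _ cwh) h4 (dvdn_mull _ (dvdnn w)).
  move/divnK=> hj; set j := (X' - x) %/ w in hj.
  have h5 : (y' + i * y - y0) = j * h.
    apply/eqP; rewrite -(eqn_pmul2r w0) -h4 -{1}hj; apply/eqP; lia.
  exists i, j; split; [by rewrite -ei /e; lia | lia | lia].
exfalso.
set X' := x0 + i * l in h3 hxX.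
have h4 : (x - X') * h = (y0 - (y' + i * y)) * w.
  rewrite !mulnBl.
  have : X' * h <= x * h by rewrite leq_mul2r ltnW ?orbT.
  lia.
have : w %| x - X' by rewrite -(Gauss_dvdl _ cwh) h4 (dvdn_mull _ (dvdnn w)).
move/divnK=> hk; set k := (x - X') %/ w in hk.
have k0 : 0 < k.
  rewrite lt0n; apply/eqP => k0; move: hk; rewrite k0 mul0n; lia.
have h5 : y0 - (y' + i * y) = k * h.
  apply/eqP; rewrite -(eqn_pmul2r w0) -h4 -{1}hk; apply/eqP; lia.
have : h <= k * h by rewrite leq_pmull.
lia.
Qed.


Lemma count_base A J l w x0 :
  0 < w -> w < l -> (forall i, i <= A -> (x0 + i * l) %/ w <= J) ->
  \sum_(i < A.+1) \sum_(j < J.+1) (j * w <= x0 + i * l : nat)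
  = \sum_(i < A.+1) ((x0 + i * l) %/ w).+1.
Proof.
move=> w0 wl hJ; apply: eq_bigr => i _.
rewrite sum_mulle_cnt //; have := hJ i (ltn_ord i); lia.
Qed.

Lemma count_split A J l h w y x0 y0 :
  0 < w -> w < l -> 0 < y -> y < h -> A <= J ->
  (forall i, i <= A -> (x0 + i * l) %/ w <= J) ->
  \sum_(i < A.+1) \sum_(j < J.+1) ((j * w <= x0 + i * l) && (i * y <= y0 + j * h) : nat)
  + \sum_(j < J.+1) (A - (y0 + j * h) %/ y)
  = \sum_(i < A.+1) ((x0 + i * l) %/ w).+1.
Proof.
move=> w0 wl y0' yh AJ hJ.
rewrite -(@count_base A J l w x0 w0 wl hJ).
have -> : \sum_(j < J.+1) (A - (y0 + j * h) %/ y)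
    = \sum_(i < A.+1) \sum_(j < J.+1) (y0 + j * h < i * y : nat).
  rewrite exchange_big /=; apply: eq_bigr => j _.
  rewrite (eq_bigr (fun i : 'I_A.+1 => ((y0 + j * h) %/ y < i : nat))); last first.
    by move=> i _; rewrite ltn_divLR.
  rewrite sum_gt_cnt; lia.
rewrite -big_split /=; apply: eq_bigr => i _.
rewrite -big_split /=; apply: eq_bigr => j _.
case: (leqP (i * y) (y0 + j * h)) => hq; rewrite ?andbT ?andbF /=.
  by rewrite addn0.
have : j * w <= x0 + i * l.
  have ji : j < i.
    have : i * y <= i * h by rewrite leq_mul2l ltnW ?orbT.
    move=> t; have : j * h < i * h by lia.
    by rewrite ltn_pmul2r //; lia.
  have : j * w <= i * l by apply: leq_mul; lia.
  lia.
by move=> ->.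
Qed.


Lemma key_count (a b c l h w y delta m x0 y0 z0 : nat)
  (ha : (0 < a)%N) (hab : (a < b)%N) (hbc : (b < c)%N)
  (hgcd : gcdn (gcdn a b) c = 1%N)
  (hwl : (w < l)%N) (hyh : (y < h)%N)
  (hrel : related a b c l h w y)
  (hdelta : (delta * c + y * b = l * a)%N)
  (htheta : (h * b = w * a)%N)
  (hbasic : (x0 * a + y0 * b + z0 * c = m)%N)
  (hL : inL l h w y x0 y0) :
  [/\ 0 < w, 0 < delta, a = h * delta, b = w * delta &
  denumerant a b c m =
  \sum_(i < (z0 %/ delta).+1) \sum_(j < (x0 + (z0 %/ delta) * l).+1)
     ((j * w <= x0 + i * l) && (i * y <= y0 + j * h) : nat)].
Proof.
case: hrel => hc _ hmin.
rewrite Lcount in hc; try exact: ltnW.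
have c0 : 0 < c by lia.
have hcw : c + w * y = l * h by lia.
have h0 : 0 < h by lia.
have ea : a = h * delta.
  apply/eqP; rewrite -(eqn_pmul2l c0); apply/eqP.
  have F1 := congr1 (muln h) hdelta.
  have F2 := congr1 (muln y) htheta.
  have F3 := congr1 (muln a) hcw.
  lia.
have eb : b = w * delta.
  apply/eqP; rewrite -(eqn_pmul2l h0); apply/eqP; rewrite htheta ea; lia.
have d0 : 0 < delta by rewrite lt0n; apply/eqP => e0; move: ha; rewrite ea e0 muln0.
have w0 : 0 < w by rewrite lt0n; apply/eqP => e0; move: ha hab; rewrite eb e0 mul0n; lia.
have cwh : coprime w h.
  rewrite /coprime -dvdn1 -hgcd !dvdn_gcd ea eb.
  have g1 : gcdn w h %| c + w * y by rewrite hcw dvdn_mull ?dvdn_gcdr.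
  have g2 : gcdn w h %| w * y by rewrite dvdn_mulr ?dvdn_gcdl.
  rewrite (dvdn_addl _ g2) in g1.
  by rewrite g1 dvdn_mulr ?dvdn_gcdr // dvdn_mulr ?dvdn_gcdl.
have cdc : coprime delta c.
  rewrite /coprime -dvdn1 -hgcd !dvdn_gcd ea eb.
  by rewrite !dvdn_mull ?dvdn_gcdl ?dvdn_gcdr.
split => //.
set A := z0 %/ delta; set J := x0 + A * l.
have l0 : 0 < l by move: hwl; clear; lia.
have AJ : A <= J by rewrite /J; have := leq_pmulr A l0; lia.
have Adef : A = z0 %/ delta := erefl. have Jdef : J = x0 + A * l := erefl.
clearbody J A.
rewrite /denumerant pair_bigA pair_bigA /= pair_bigA /=.
pose P := fun p : ('I_m.+1 * 'I_m.+1) * 'I_m.+1 =>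
  (p.1.1 * a + p.1.2 * b + p.2 * c == m).
pose Q := fun q : 'I_A.+1 * 'I_J.+1 =>
  ((q.2 * w <= x0 + q.1 * l) && (q.1 * y <= y0 + q.2 * h)).
pose f := fun q : 'I_A.+1 * 'I_J.+1 =>
  ((inord (x0 + q.1 * l - q.2 * w) : 'I_m.+1, inord (y0 + q.2 * h - q.1 * y) : 'I_m.+1),
   inord (z0 - q.1 * delta) : 'I_m.+1).
have hid : forall i : 'I_A.+1, i * delta <= z0.
  by move=> i; rewrite -leq_divRL // -Adef -ltnS.
have fw : forall q, Q q ->
  (x0 + q.1 * l - q.2 * w) * a + (y0 + q.2 * h - q.1 * y) * b + (z0 - q.1 * delta) * c = m.
  move=> q /andP[q1 q2]; exact: fwd.
have bnd : forall X Y Z, X * a + Y * b + Z * c = m -> [/\ X < m.+1, Y < m.+1 & Z < m.+1].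
  move=> X Y Z e.
  have : X <= X * a by rewrite leq_pmulr.
  have : Y <= Y * b by rewrite leq_pmulr //; lia.
  have : Z <= Z * c by rewrite leq_pmulr.
  move=> h1 h2 h3; split; lia.
have fv : forall q, Q q -> [/\ ((f q).1.1 : nat) = x0 + q.1 * l - q.2 * w,
    ((f q).1.2 : nat) = y0 + q.2 * h - q.1 * y & ((f q).2 : nat) = z0 - q.1 * delta].
  move=> q Qq; have [b1 b2 b3] := bnd _ _ _ (fw q Qq).
  by rewrite /f /= !inordK.
transitivity (\sum_(p : ('I_m.+1 * 'I_m.+1) * 'I_m.+1) (P p : nat)); first by [].
transitivity (\sum_(q : 'I_A.+1 * 'I_J.+1) (Q q : nat)); last by [].
apply: (@sum_bij _ _ P Q f).
- move=> [i1 j1] [i2 j2] Q1 Q2 e.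
  have [e11 e12 e13] := fv _ Q1; have [e21 e22 e23] := fv _ Q2.
  rewrite e in e11 e13.
  have ez : z0 - i1 * delta = z0 - i2 * delta by rewrite -e13 -e23.
  have ei : i1 = i2.
    have e' : i1 * delta = i2 * delta by move: ez (hid i1) (hid i2); clear; lia.
    by apply: val_inj; apply/eqP; rewrite -(eqn_pmul2r d0) e'.
  subst i2.
  have ex : x0 + i1 * l - j1 * w = x0 + i1 * l - j2 * w by rewrite -e11 -e21.
  move: Q1 Q2 => /andP[/= Q1 _] /andP[/= Q2 _].
  have e' : j1 * w = j2 * w by move: ex Q1 Q2; clear; lia.
  have ej : j1 = j2 by apply: val_inj; apply/eqP; rewrite -(eqn_pmul2r w0) e'.
  by rewrite ej.
- move=> q Qq; rewrite /P; have [-> -> ->] := fv q Qq; exact/eqP/fw.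
- move=> [[x y'] z] /eqP /= hx.
  have y0h : y0 < h by move: hL; rewrite /inL => /and3P[].
  have [i [j [e1 e2 e3]]] := @bwd a b c l h w y delta m x0 y0 z0 x y' z c0 w0 d0 y0h cdc cwh ea eb hcw hbasic (hmin _ _ hL) hx.
  have iA : i < A.+1 by rewrite ltnS Adef leq_divRL //; lia.
  have jJ : j < J.+1.
    rewrite ltnS Jdef; have : j <= j * w by rewrite leq_pmulr.
    have : i * l <= A * l by rewrite leq_mul2r -ltnS iA orbT.
    lia.
  exists (Ordinal iA, Ordinal jJ).
    rewrite /Q /=; apply/andP; split; lia.
  have Qq : Q (Ordinal iA, Ordinal jJ) by rewrite /Q /=; apply/andP; split; lia.
  have [f1 f2 f3] := fv _ Qq.
  congr (_, _, _); [rewrite -(inord_val x) | rewrite -(inord_val y') | rewrite -(inord_val z)]; congr inord => /=; lia.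
Qed.

Local Open Scope ring_scope.

Theorem theorem6 (a b c l h w y delta m x0 y0 z0 : nat)
  (ha : (0 < a)%N) (hab : (a < b)%N) (hbc : (b < c)%N)
  (hgcd : gcdn (gcdn a b) c = 1%N)
  (hwl : (w < l)%N) (hyh : (y < h)%N)
  (hrel : related a b c l h w y)
  (hdelta : (delta * c + y * b = l * a)%N)   (* delta = (l a - y b)/c *)
  (htheta : (h * b = w * a)%N)               (* theta = (h b - w a)/c = 0 *)
  (hbasic : (x0 * a + y0 * b + z0 * c = m)%N)
  (hL : inL l h w y x0 y0) :
  let d : int := (denumerant a b c m)%:Z in
  let A := (z0 %/ delta)%N in
  let x0bar := (x0 %/ w)%N in let x0hat := (x0 %% w)%N in
  let lbar := (l %/ w)%N in let lhat := (l %% w)%N in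
  let tri := ((A * (1 + A)) %/ 2)%N in
  let F : int := ((1 + A) * (1 + A + x0bar))%N%:Z
                 + (lbar%:Z - 2) * tri%:Z
                 + (floor_sum x0hat lhat w A)%:Z in
  ((y = 0)%N -> d = F) /\
  ((0 < y)%N ->
    let y0bar := (y0 %/ y)%N in let y0hat := (y0 %% y)%N in
    let hbar := (h %/ y)%N in let hhat := (h %% y)%N in
    let k1 : int := ceil_div ((z0 * y)%N%:Z - (y0 * delta)%N%:Z) a in
    [/\ 0 <= k1,
        k1 = 0 -> d = F,
        1 <= k1 <= A%:Z ->
          d = ((1 + A) * (1 + A + x0bar))%N%:Z
              + k1 * (y0bar%:Z - A%:Z)
              + (lbar%:Z - 2) * tri%:Z
              + (hbar * (((`|k1|%N - 1) * `|k1|%N) %/ 2))%N%:Z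
              + (floor_sum x0hat lhat w A)%:Z
              + (\sum_(k < `|k1|%N) ((y0hat + k * hhat) %/ y))%N%:Z
      & A%:Z < k1 ->
          d = ((1 + A) * (1 + x0bar + y0bar))%N%:Z
              + (lbar%:Z + hbar%:Z - 2) * tri%:Z
              + (floor_sum x0hat lhat w A)%:Z
              + (floor_sum y0hat hhat y A)%:Z]).
Proof.
move=> d A x0bar x0hat lbar lhat tri F.
have [w0 d0 ea eb hd] := @key_count a b c l h w y delta m x0 y0 z0 ha hab hbc hgcd hwl hyh hrel hdelta htheta hbasic hL.
have y0h : (y0 < h)%N by move: hL; rewrite /inL => /and3P[].
have l0 : (0 < l)%N by move: hwl; clear; lia.
rewrite -/A in hd.
set J := (x0 + A * l)%N in hd.
have hJ : forall i, (i <= A)%N -> ((x0 + i * l) %/ w <= J)%N.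
  move=> i iA; apply: (leq_trans (leq_div _ _)); rewrite /J leq_add2l leq_mul2r iA orbT //.
have AJ : (A <= J)%N by rewrite /J; have := leq_pmulr A l0; lia.
have HB : (\sum_(i < A.+1) ((x0 + i * l) %/ w).+1 =
           A.+1 * (x0bar + 1) + lbar * tri + floor_sum x0hat lhat w A)%N.
  transitivity (\sum_(i < A.+1) ((x0bar + 1) + i * lbar + (x0hat + i * lhat) %/ w))%N.
    by apply: eq_bigr => i _; rewrite div_split // /x0bar /lbar /x0hat /lhat; lia.
  rewrite !big_split /= !sum_nat_const !card_ord -big_distrl /= sum_id -/tri.
  change (\sum_(i < A.+1) ((x0hat + i * lhat) %/ w))%N with (floor_sum x0hat lhat w A); lia.
have htri : (tri * 2 = A * (1 + A))%N by rewrite /tri -sum_id sum_id2 add1n.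
have dE : d = (denumerant a b c m)%:Z by [].
have FE : F = ((1 + A) * (1 + A + x0bar))%N%:Z + (lbar%:Z - 2) * tri%:Z
                 + (floor_sum x0hat lhat w A)%:Z by [].
clearbody d F.
split.
  move=> ey; rewrite dE FE hd.
  rewrite (eq_bigr (fun i : 'I_A.+1 => \sum_(j < J.+1) (j * w <= x0 + i * l : nat))%N); last first.
    by move=> i _; apply: eq_bigr => j _; rewrite ey muln0 leq0n andbT.
  rewrite count_base // HB.
  lia.
move=> ypos y0bar y0hat hbar hhat k1.
have ycnt := @count_split A J l h w y x0 y0 w0 hwl ypos hyh AJ hJ.
rewrite -hd in ycnt.
set V := fun j => ((y0 + j * h) %/ y)%N.
have k1ge0 : 0 <= k1.
  apply: ceil_div_ge0 => //.
  have : (y0 * delta < h * delta)%N by rewrite ltn_pmul2r.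
  rewrite ea; lia.
set n1 := `|k1|%N.
have hk1 : k1 = n1%:Z by rewrite /n1 gez0_abs.
have hn1 : forall j, (j < n1)%N = ((y0 + j * h) * delta < z0 * y)%N.
  move=> j; have := @ceil_divP ((z0 * y)%N%:Z - (y0 * delta)%N%:Z) a ha j.
  rewrite -/k1 hk1 ltz_nat => ->.
  rewrite ea; apply/idP/idP => H; lia.
have F1 : forall j, (j < n1)%N -> (V j <= A)%N.
  move=> j; rewrite hn1 => H.
  have t1 : (V j * y <= y0 + j * h)%N by rewrite /V leq_trunc_div.
  have t2 : (V j * y * delta <= (y0 + j * h) * delta)%N by rewrite leq_mul2r t1 orbT.
  have t3 : (V j * delta * y < z0 * y)%N by move: t2 H; clear; lia.
  rewrite ltn_pmul2r // in t3.
  by rewrite /A leq_divRL // ltnW.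
have F2 : forall j, (n1 <= j)%N -> (A <= V j)%N.
  move=> j; rewrite leqNgt hn1 -leqNgt => H.
  have t1 : (A * delta <= z0)%N by rewrite /A leq_trunc_div.
  have t2 : (A * delta * y <= z0 * y)%N by rewrite leq_mul2r t1 orbT.
  have t3 : (A * y * delta <= (y0 + j * h) * delta)%N by move: t2 H; clear; lia.
  rewrite leq_pmul2r // in t3.
  by rewrite /V leq_divRL.
have F3 : forall j, (A <= j)%N -> (A <= V j)%N.
  move=> j Aj; rewrite /V leq_divRL //.
  have : (j * y <= j * h)%N by rewrite leq_mul2l ltnW ?orbT.
  have : (A * y <= j * y)%N by rewrite leq_mul2r Aj orbT.
  lia.
set n' := minn n1 A.+1.
have hExc : (\sum_(j < J.+1) (A - (y0 + j * h) %/ y) = \sum_(j < n') (A - V j))%N.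
  have := @sum_trunc n' J.+1 (fun j => (A - V j)%N); rewrite /= /V; apply.
    rewrite /n'; lia.
  move=> j jn _; apply/eqP; rewrite subn_eq0.
  move: jn; rewrite /n' ssrnat.geq_min => /orP[/F2 //|] Aj.
  by apply: F3; apply: ltnW.
have ES : (\sum_(j < n') (A - V j) + \sum_(j < n') V j = n' * A)%N.
  rewrite -big_split /= (eq_bigr (fun _ => A)); last first.
    move=> j _; have jn : (j < n1)%N by apply: (leq_trans (ltn_ord j)); rewrite /n' geq_minl.
    have := F1 j jn; lia.
  by rewrite sum_nat_const card_ord mulnC.
have SV : (\sum_(j < n') V j = n' * y0bar + hbar * \sum_(j < n') j
            + \sum_(j < n') ((y0hat + j * hhat) %/ y))%N.
  transitivity (\sum_(j < n') (y0bar + j * hbar + (y0hat + j * hhat) %/ y))%N.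
    by apply: eq_bigr => j _; rewrite /V div_split // /y0bar /hbar /y0hat /hhat.
  rewrite !big_split /= sum_nat_const card_ord -big_distrl /= mulnC [(_ * hbar)%N]mulnC.
  done.
rewrite hExc in ycnt.
set Base := (\sum_(i < A.+1) ((x0 + i * l) %/ w).+1)%N in ycnt HB.
set Exc := (\sum_(j < n') (A - V j))%N in ycnt ES.
set SVs := (\sum_(j < n') V j)%N in ES SV.
set den := denumerant a b c m in ycnt dE.
have dB : (den + n' * A = Base + SVs)%N.
  move: ycnt ES; clearbody Base Exc SVs den; clear; lia.
have BF : (Base%:Z = F).
  rewrite FE HB; move: htri; clear; lia.
have dF : d = F + (n' * y0bar + hbar * \sum_(j < n') j
            + \sum_(j < n') ((y0hat + j * hhat) %/ y))%N%:Z - (n' * A)%N%:Z.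
  rewrite dE -BF -SV; move: dB; clearbody Base SVs den; clear; lia.
clearbody V.
split => //.
- move=> k10; have n10 : n1 = 0%N by move: hk1 k10; clear; lia.
  rewrite dF /n' n10 min0n !big_ord0; clear; lia.
- move=> /andP[k1a k1b]; have n'E : n' = n1 by rewrite /n'; move: hk1 k1a k1b; clear; lia.
  rewrite dF FE n'E sum_id' hk1.
  set T := (((n1 - 1) * n1) %/ 2)%N; clearbody T.
  set S1 := (\sum_(j < n1) ((y0hat + j * hhat) %/ y))%N; clearbody S1.
  clear; lia.
- move=> Ak1; have n'E : n' = A.+1 by rewrite /n'; move: hk1 Ak1; clear; lia.
  rewrite dF FE n'E sum_id -/tri.
  change (\sum_(j < A.+1) ((y0hat + j * hhat) %/ y))%N with (floor_sum y0hat hhat y A).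
  clear; lia.
Qed.
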